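(* Let $d\ge 2$ and $\overrightarrow{w}\in(0,\infty)^d$, and let $\mathbb{C}$ be the set of all $d$-dimensional copulas that are $\overrightarrow{w}$-CM. Then $\mathbb{C}$ is minimal in set concordance ordering; that is, if $C\in\mathbb{C}$ and $C^*$ is any $d$-dimensional copula with $C^*\prec C$, then $C^*\in\mathbb{C}$.
   Context: A $d$-dimensional copula $C$ is $\overrightarrow{w}$-CM if a random vector $\overrightarrow{U}=(U_1,\dots,U_d)$ with distribution function $C$ (so each $U_i$ is uniform on $[0,1]$) satisfies $P\left(\sum_{i=1}^d w_iU_i=\frac12\sum_{i=1}^d w_i\right)=1$. For distribution functions $H,H^*$ on $\mathbb{R}^d$ with the same marginals, the concordance ordering $H\prec H^*$ means $H(\overrightarrow{x})\le H^*(\overrightarrow{x})$ and $\overline{H}(\overrightarrow{x})\le\overline{H^*}(\overrightarrow{x})$ for all $\overrightarrow{x}\in\mathbb{R}^d$, where $\overline{H}(\overrightarrow{x})=P(X_1>x_1,\dots,X_d>x_d)$ is the joint survival function. A set $\mathbb{C}$ of copulas is minimal in set concordance ordering if $C\in\mathbb{C}$ and $C^*\prec C$ imply $C^*\in\mathbb{C}$ (the empty set is trivially minimal). *)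

(* Defs.v *)
From Stdlib Require Import Reals.
Open Scope R_scope.

(* Points of R^d: only the coordinates i < d are meaningful. *)
Definition point := nat -> R.
Definition pset := point -> Prop.

Fixpoint sumd (n : nat) (f : nat -> R) : R :=
  match n with
  | O => 0
  | S m => sumd m f + f m
  end.

Inductive borel (d : nat) : pset -> Prop :=
| borel_box : forall a b : point,
    borel d (fun x => forall i, (i < d)%nat -> a i < x i < b i)
| borel_compl : forall A, borel d A -> borel d (fun x => ~ A x)
| borel_union : forall A : nat -> pset, (forall n, borel d (A n)) ->
    borel d (fun x => exists n, A n x)
| borel_ext : forall A B : pset, (forall x, A x <-> B x) -> borel d A -> borel d B.

(* Probability measures on the Borel sets of R^d (values on non-Borel sets
   are irrelevant). *)
Record prob_measure (d : nat) := {
  pm :> pset -> R;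
  pm_nonneg : forall A, borel d A -> 0 <= pm A;
  pm_total : pm (fun _ => True) = 1;
  pm_sigma : forall A : nat -> pset,
    (forall n, borel d (A n)) ->
    (forall m n x, m <> n -> A m x -> A n x -> False) ->
    infinite_sum (fun n => pm (A n)) (pm (fun x => exists n, A n x))
}.

Definition dist_fun {d : nat} (mu : prob_measure d) : point -> R :=
  fun x => mu (fun y => forall i, (i < d)%nat -> y i <= x i).

Definition surv_fun {d : nat} (mu : prob_measure d) : point -> R :=
  fun x => mu (fun y => forall i, (i < d)%nat -> x i < y i).

Definition is_copula (d : nat) (C : point -> R) : Prop :=
  exists mu : prob_measure d,
    dist_fun mu = C /\
    (forall i t, (i < d)%nat -> mu (fun y => y i <= t) = Rmax 0 (Rmin t 1)).

Definition w_CM (d : nat) (w : point) (C : point -> R) : Prop :=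
  forall mu : prob_measure d, dist_fun mu = C ->
    mu (fun y => sumd d (fun i => w i * y i) = / 2 * sumd d w) = 1.

Definition conc_le (d : nat) (H1 H2 : point -> R) : Prop :=
  forall mu1 mu2 : prob_measure d, dist_fun mu1 = H1 -> dist_fun mu2 = H2 ->
    forall x, dist_fun mu1 x <= dist_fun mu2 x /\ surv_fun mu1 x <= surv_fun mu2 x.

Definition minimal_conc (d : nat) (S : (point -> R) -> Prop) : Prop :=
  forall C Cs, S C -> is_copula d Cs -> conc_le d Cs C -> S Cs.

(* Main.v *)
Require Import Defs.
From Stdlib Require Import Reals Lra Lia ZArith Classical FunctionalExtensionality PropExtensionality Wf_nat.
Open Scope R_scope.

Lemma set_ext (A B : pset) : (forall x, A x <-> B x) -> A = B.
Proof. intro H; apply functional_extensionality; intro x; apply propositional_extensionality; auto. Qed.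

Lemma borel_full d : borel d (fun _ => True).
Proof.
  set (B := fun x : point => forall i, (i < d)%nat -> 0 < x i < 1).
  assert (HB : borel d B) by apply borel_box.
  apply (borel_ext d (fun x => exists n, (match n with O => B | _ => fun x => ~ B x end) x)).
  - intro x; split; auto. intros _. destruct (classic (B x)); [exists O|exists 1%nat]; auto.
  - apply borel_union. intros [|n]; auto. apply borel_compl; auto.
Qed.

Lemma borel_empty d : borel d (fun _ => False).
Proof.
  apply (borel_ext d (fun x => ~ True)). intuition. apply borel_compl, borel_full.
Qed.

Lemma borel_or d A B : borel d A -> borel d B -> borel d (fun x => A x \/ B x).
Proof.
  intros HA HB.
  apply (borel_ext d (fun x => exists n, (match n with O => A | _ => B end) x)).
  - intro x; split. intros [[|n] H]; auto. intros [H|H]; [exists O|exists 1%nat]; auto.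
  - apply borel_union. intros [|n]; auto.
Qed.

Lemma borel_and d A B : borel d A -> borel d B -> borel d (fun x => A x /\ B x).
Proof.
  intros HA HB. apply (borel_ext d (fun x => ~ (~ A x \/ ~ B x))).
  - intro x; split. intro H; split; apply NNPP; intro; apply H; auto. intros [] []; auto.
  - apply borel_compl, borel_or; apply borel_compl; auto.
Qed.

Lemma Rdist_small v l : (forall eps, eps > 0 -> Rdist v l < eps) -> v = l.
Proof.
  intro H. destruct (Req_dec v l) as [|Hn]; auto.
  assert (Rdist v l > 0) by (unfold Rdist; apply Rabs_pos_lt; lra).
  specialize (H _ H0); lra.
Qed.

Lemma inf_sum_ev f l N0 v : infinite_sum f l ->
  (forall n, (n >= N0)%nat -> sum_f_R0 f n = v) -> l = v.
Proof.
  intros Hs Hv. symmetry. apply Rdist_small. intros eps He.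
  destruct (Hs eps He) as [N HN]. rewrite <- (Hv (max N N0)) by lia. apply HN; lia.
Qed.

Lemma pm_empty d (mu : prob_measure d) : mu (fun _ => False) = 0.
Proof.
  pose proof (pm_sigma d mu (fun _ _ => False) (fun _ => borel_empty d)) as H.
  specialize (H ltac:(auto)). cbv beta in H.
  replace (fun x : point => exists _ : nat, False) with (fun _ : point => False) in H
    by (apply set_ext; intro; split; [tauto|intros [_ []]]).
  set (a := mu (fun _ => False)) in *.
  destruct (Req_dec a 0) as [|Hn]; auto.
  assert (Hp : Rabs a / 2 > 0) by (apply Rabs_pos_lt in Hn; lra).
  destruct (H _ Hp) as [N HN]. specialize (HN (S N) ltac:(lia)).
  rewrite sum_cte in HN. unfold Rdist in HN.
  replace (a * INR (S (S N)) - a) with (a * INR (S N)) in HN by (rewrite (S_INR (S N)); ring).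
  rewrite Rabs_mult, (Rabs_right (INR (S N))) in HN by (apply Rle_ge, pos_INR).
  assert (1 <= INR (S N)) by (rewrite S_INR; pose proof (pos_INR N); lra).
  pose proof (Rabs_pos a). nra.
Qed.

Lemma pm_add2 d (mu : prob_measure d) A B : borel d A -> borel d B ->
  (forall x, A x -> B x -> False) -> mu (fun x => A x \/ B x) = mu A + mu B.
Proof.
  intros HA HB Hd.
  set (F := fun n => match n with O => A | 1%nat => B | _ => fun _ : point => False end).
  assert (HF : forall n, borel d (F n)) by (intros [|[|n]]; simpl; auto; apply borel_empty).
  assert (HD : forall m n x, m <> n -> F m x -> F n x -> False).
  { intros [|[|m]] [|[|n]] x Hmn; simpl; intros; eauto; lia. }
  pose proof (pm_sigma d mu F HF HD) as H.
  replace (fun x : point => exists n, F n x) with (fun x => A x \/ B x) in H.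
  2:{ apply set_ext; intro x; split. intros [H1|H1]; [exists O|exists 1%nat]; auto.
      intros [[|[|n]] H1]; simpl in H1; tauto. }
  apply (inf_sum_ev _ _ 1%nat _ H). intros n Hn. induction n as [|n IH]; [lia|].
  destruct n. simpl. ring. change (sum_f_R0 (fun n => mu (F n)) (S n) + mu (fun _ => False) = mu A + mu B).
  rewrite IH by lia. rewrite pm_empty. ring.
Qed.

Lemma pm_mono d (mu : prob_measure d) A B : borel d A -> borel d B ->
  (forall x, A x -> B x) -> mu A <= mu B.
Proof.
  intros HA HB Hs.
  replace B with (fun x => A x \/ (B x /\ ~ A x)).
  2:{ apply set_ext; intro x; split. intros [|[]]; auto. intro; destruct (classic (A x)); auto. }
  rewrite pm_add2; auto. pose proof (pm_nonneg d mu (fun x => B x /\ ~ A x)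
     (borel_and d _ _ HB (borel_compl d _ HA))). lra.
  apply borel_and; auto; apply borel_compl; auto. intros x ? []; auto.
Qed.

Lemma pm_union_zero d (mu : prob_measure d) (A : nat -> pset) :
  (forall n, borel d (A n)) -> (forall n, mu (A n) = 0) ->
  mu (fun x => exists n, A n x) = 0.
Proof.
  intros HA H0.
  set (B := fun n x => A n x /\ ~ (exists k, (k < n)%nat /\ A k x)).
  assert (HB : forall n, borel d (B n)).
  { intro n. apply borel_and; auto. apply borel_compl, borel_union. intro k.
    destruct (Compare_dec.lt_dec k n).
    - apply (borel_ext d (A k)); auto. intuition.
    - apply (borel_ext d (fun _ => False)). intuition. apply borel_empty. }
  assert (HD : forall m n x, m <> n -> B m x -> B n x -> False).
  { intros m n x Hmn [Hm Hm'] [Hn Hn']. destruct (Compare_dec.lt_dec m n).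
    - apply Hn'; eauto. - apply Hm'. exists n; split; auto; lia. }
  pose proof (pm_sigma d mu B HB HD) as H.
  replace (fun x : point => exists n, B n x) with (fun x => exists n, A n x) in H.
  2:{ apply set_ext; intro x; split.
      - intros [n Hn]. revert Hn. induction n as [n IH] using lt_wf_ind. intro Hn.
        destruct (classic (exists k, (k < n)%nat /\ A k x)) as [[k [Hk1 Hk2]]|Hno].
        + exact (IH k Hk1 Hk2).
        + exists n; split; auto.
      - intros [n [Hn _]]; eauto. }
  apply (inf_sum_ev _ _ O _ H). intros n _.
  assert (Hz : forall k, mu (B k) = 0).
  { intro k. apply Rle_antisym. rewrite <- (H0 k). apply pm_mono; auto. intros x []; auto.
    apply pm_nonneg; auto. }
  induction n; simpl; rewrite ?IHn, Hz; ring.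
Qed.
Lemma INR_to_nat z : (0 <= z)%Z -> INR (Z.to_nat z) = IZR z.
Proof. intro H. rewrite INR_IZR_INZ, Z2Nat.id; auto. Qed.

Lemma nat_arch r : exists n, r < INR n.
Proof.
  destruct (archimed r) as [H1 H2].
  destruct (Z_le_gt_dec 0 (up r)) as [Hz|Hz].
  - exists (Z.to_nat (up r)). rewrite INR_to_nat by lia; lra.
  - exists O. apply Z.gt_lt, IZR_lt in Hz. simpl in *. lra.
Qed.

Lemma sumd_ge d f j : (forall i, (i < d)%nat -> 0 <= f i) -> (j < d)%nat -> f j <= sumd d f.
Proof.
  induction d; intros H Hj; [lia|]. simpl.
  assert (0 <= sumd d f).
  { clear IHd Hj. induction d; simpl. lra. assert (0 <= f d) by (apply H; lia).
    assert (0 <= sumd d f) by (apply IHd; intros; apply H; lia). lra. }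
  destruct (Nat.eq_dec j d). subst. lra.
  assert (f j <= sumd d f) by (apply IHd; [intros; apply H; lia| lia]).
  assert (0 <= f d) by (apply H; lia). lra.
Qed.

Lemma sumd_le d w x y e : (forall i, (i < d)%nat -> 0 < w i) ->
  (forall i, (i < d)%nat -> y i <= x i + e) ->
  sumd d (fun i => w i * y i) <= sumd d (fun i => w i * x i) + e * sumd d w.
Proof.
  induction d; intros Hw H; simpl. lra.
  assert (IH := IHd (fun i Hi => Hw i ltac:(lia)) (fun i Hi => H i ltac:(lia))).
  assert (w d * y d <= w d * (x d + e)) by (apply Rmult_le_compat_l; [left; apply Hw; lia| apply H; lia]).
  nra.
Qed.

Lemma sumd_lt d w x y : (1 <= d)%nat -> (forall i, (i < d)%nat -> 0 < w i) ->
  (forall i, (i < d)%nat -> y i < x i) ->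
  sumd d (fun i => w i * y i) < sumd d (fun i => w i * x i).
Proof.
  intros Hd Hw H. destruct d as [|d]; [lia|]. simpl.
  assert (H1 : sumd d (fun i => w i * y i) <= sumd d (fun i => w i * x i) + 0 * sumd d w).
  { apply sumd_le. intros; apply Hw; lia. intros i Hi; specialize (H i ltac:(lia)); lra. }
  assert (w d * y d < w d * x d) by (apply Rmult_lt_compat_l; [apply Hw; lia| apply H; lia]).
  lra.
Qed.

Fixpoint dig (K i n : nat) : nat := match i with O => (n mod K)%nat | S i => dig K i (n / K)%nat end.
Fixpoint enc (K : nat) (g : nat -> nat) (l : nat) : nat :=
  match l with O => O | S l => (g O + K * enc K (fun i => g (S i)) l)%nat end.

Lemma dig_enc K l : forall g i, K <> O -> (forall j, (j < l)%nat -> (g j < K)%nat) -> (i < l)%nat ->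
  dig K i (enc K g l) = g i.
Proof.
  induction l; intros g i HK Hg Hi; [lia|]. simpl. destruct i as [|i]; simpl.
  - rewrite Nat.mul_comm, Nat.Div0.mod_add. apply Nat.mod_small, Hg; lia.
  - rewrite Nat.mul_comm, Nat.div_add, Nat.div_small by (auto; apply Hg; lia). simpl.
    apply (IHl (fun i => g (S i))); [auto| |lia]. intros; apply Hg; lia.
Qed.

Lemma grid_low (M : nat) y : (0 < M)%nat -> Rabs y + 2 < INR M ->
  exists j, (j < 2 * M * M)%nat /\ y <= INR j / INR M - INR M <= y + / INR M.
Proof.
  intros HM Hy. assert (HMr : 0 < INR M) by (apply lt_0_INR; lia).
  set (t := (y + INR M) * INR M). destruct (archimed t) as [H1 H2].
  assert (Ht : 0 < t) by (unfold t; apply Rmult_lt_0_compat; [split_Rabs; lra|lra]).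
  assert (Hz : (0 <= up t)%Z) by (apply le_0_IZR; lra).
  exists (Z.to_nat (up t)). rewrite INR_to_nat by auto. split.
  - apply INR_lt. rewrite INR_to_nat by auto. rewrite !mult_INR. simpl (INR 2).
    unfold t in *. assert (y < INR M - 2) by (split_Rabs; lra). nra.
  - unfold t in *. split.
    + apply (Rmult_le_reg_r (INR M)); auto. field_simplify; nra.
    + apply (Rmult_le_reg_r (INR M)); auto. field_simplify; nra.
Qed.

Lemma grid_up (M : nat) y : (0 < M)%nat -> Rabs y + 2 < INR M ->
  exists j, (j < 2 * M * M)%nat /\ y - 2 / INR M <= INR j / INR M - INR M < y.
Proof.
  intros HM Hy. assert (HMr : 0 < INR M) by (apply lt_0_INR; lia).
  set (t := (y + INR M) * INR M). destruct (archimed t) as [H1 H2].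
  assert (Ht : 2 < t).
  { unfold t. assert (2 < y + INR M) by (split_Rabs; lra).
    assert (1 <= INR M) by (replace 1 with (INR 1) by reflexivity; apply le_INR; lia). nra. }
  assert (Hz : (0 <= up t - 2)%Z) by (apply le_0_IZR; rewrite minus_IZR; simpl; lra).
  exists (Z.to_nat (up t - 2)). rewrite INR_to_nat, minus_IZR by auto. simpl (IZR 2). split.
  - apply INR_lt. rewrite INR_to_nat, minus_IZR by auto. rewrite !mult_INR. simpl (INR 2).
    unfold t in *. assert (y < INR M - 2) by (split_Rabs; lra). simpl (IZR 2). nra.
  - unfold t in *. split.
    + apply (Rmult_le_reg_r (INR M)); auto. field_simplify; nra.
    + apply (Rmult_lt_reg_r (INR M)); auto. field_simplify; nra.
Qed.

Lemma borel_gt d i a : (i < d)%nat -> borel d (fun y => a < y i).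
Proof.
  intro Hi.
  set (A := fun n : nat => fun y : point => forall j, (j < d)%nat ->
     (if Nat.eqb j i then a else - INR n) < y j < (if Nat.eqb j i then a + INR n else INR n)).
  apply (borel_ext d (fun y => exists n, A n y)).
  - intro y; split.
    + intros [n Hn]. specialize (Hn i Hi). rewrite Nat.eqb_refl in Hn. lra.
    + intro Ha. destruct (nat_arch (Rabs (y i - a) + sumd d (fun j => Rabs (y j)))) as [n Hn].
      exists n. intros j Hj. assert (Rabs (y j) <= sumd d (fun j => Rabs (y j)))
        by (apply (sumd_ge d (fun j => Rabs (y j))); auto; intros; apply Rabs_pos).
      pose proof (Rabs_pos (y i - a)).
      destruct (Nat.eqb_spec j i).
      * subst. split; auto. split_Rabs; lra.
      * split_Rabs; lra.
  - apply borel_union. intro n. apply borel_box.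
Qed.

Lemma borel_L d x : borel d (fun y => forall i, (i < d)%nat -> y i <= x i).
Proof.
  apply (borel_ext d (fun y => ~ exists i, (i < d)%nat /\ x i < y i)).
  - intro y; split.
    + intros H i Hi. apply Rnot_lt_le. intro; apply H; eauto.
    + intros H [i [Hi Hl]]. specialize (H i Hi). lra.
  - apply borel_compl, borel_union. intro i. destruct (Compare_dec.lt_dec i d).
    + apply (borel_ext d (fun y => x i < y i)). intuition. apply borel_gt; auto.
    + apply (borel_ext d (fun _ => False)). intuition. apply borel_empty.
Qed.

Lemma borel_U d x : borel d (fun y => forall i, (i < d)%nat -> x i < y i).
Proof.
  apply (borel_ext d (fun y => ~ exists i, (i < d)%nat /\ ~ x i < y i)).
  - intro y; split.
    + intros H i Hi. apply NNPP. intro; apply H; eauto.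
    + intros H [i [Hi Hl]]. auto.
  - apply borel_compl, borel_union. intro i. destruct (Compare_dec.lt_dec i d).
    + apply (borel_ext d (fun y => ~ x i < y i)). intuition. apply borel_compl, borel_gt; auto.
    + apply (borel_ext d (fun _ => False)). intuition. apply borel_empty.
Qed.

From Stdlib Require Import IndefiniteDescription.

Definition gK m := (2 * S m * S m)%nat.
Definition xp m n : point := fun i => INR (dig (gK m) i n) / INR (S m) - INR (S m).
Definition Sw d (w y : point) := sumd d (fun i => w i * y i).

Lemma grid_choice d m (y : point) (low : bool) :
  (forall i, (i < d)%nat -> Rabs (y i) + 2 < INR (S m)) ->
  exists n, forall i, (i < d)%nat ->
    if low then y i <= xp m n i <= y i + / INR (S m)
    else y i - 2 / INR (S m) <= xp m n i < y i.
Proof.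
  intro Hy.
  assert (Hc : forall i, exists j, (i < d)%nat -> (j < gK m)%nat /\
    (if low then y i <= INR j / INR (S m) - INR (S m) <= y i + / INR (S m)
    else y i - 2 / INR (S m) <= INR j / INR (S m) - INR (S m) < y i)).
  { intro i. destruct (Compare_dec.lt_dec i d) as [Hi|Hi].
    - destruct low.
      + destruct (grid_low (S m) (y i)) as [j Hj]; [lia|auto|]. exists j; auto.
      + destruct (grid_up (S m) (y i)) as [j Hj]; [lia|auto|]. exists j; auto.
    - exists O; intro; lia. }
  destruct (functional_choice _ Hc) as [g Hg].
  exists (enc (gK m) g d). intros i Hi. unfold xp. rewrite dig_enc.
  - apply Hg; auto.
  - unfold gK; lia.
  - intros j Hj; apply Hg; auto.
  - auto.
Qed.

Lemma sumd_nonneg d f : (forall i, (i < d)%nat -> 0 <= f i) -> 0 <= sumd d f.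
Proof. induction d; intros H; simpl. lra. assert (0 <= f d) by (apply H; lia).
  assert (0 <= sumd d f) by (apply IHd; intros; apply H; lia). lra. Qed.

Lemma pick_m d (w y : point) eps : eps > 0 -> exists m,
  (forall i, (i < d)%nat -> Rabs (y i) + 2 < INR (S m)) /\ 2 * sumd d w < eps * INR (S m).
Proof.
  intro He. destruct (nat_arch (sumd d (fun j => Rabs (y j)) + 2 + Rabs (2 * sumd d w / eps))) as [n Hn].
  exists n. rewrite S_INR. pose proof (Rabs_pos (2 * sumd d w / eps)).
  pose proof (sumd_nonneg d (fun j => Rabs (y j)) (fun j _ => Rabs_pos (y j))).
  split.
  - intros i Hi. assert (Rabs (y i) <= sumd d (fun j => Rabs (y j)))
        by (apply (sumd_ge d (fun j => Rabs (y j))); auto; intros; apply Rabs_pos). lra.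
  - assert (Hq : 2 * sumd d w / eps < INR n + 1) by (pose proof (Rle_abs (2 * sumd d w / eps)); lra).
    apply (Rmult_lt_compat_l eps) in Hq; auto. field_simplify in Hq; lra.
Qed.

Lemma sumd_pos d w : (forall i, (i < d)%nat -> 0 < w i) -> 0 <= sumd d w.
Proof. induction d; intros H; simpl. lra. assert (0 < w d) by (apply H; lia).
  assert (0 <= sumd d w) by (apply IHd; intros; apply H; lia). lra. Qed.

Lemma cover_low d (w : point) c y : (forall i, (i < d)%nat -> 0 < w i) ->
  (Sw d w y < c <-> exists m n, Sw d w (xp m n) < c /\ forall i, (i < d)%nat -> y i <= xp m n i).
Proof.
  intro Hw. split.
  - intro H. destruct (pick_m d w y (c - Sw d w y)) as [m [Hm1 Hm2]]; [lra|].
    destruct (grid_choice d m y true Hm1) as [n Hn]. exists m, n. split.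
    + assert (Hs := sumd_le d w y (xp m n) (/ INR (S m)) Hw (fun i Hi => proj2 (Hn i Hi))).
      unfold Sw in *. assert (0 < INR (S m)) by (apply lt_0_INR; lia).
      assert (/ INR (S m) * sumd d w < c - sumd d (fun i => w i * y i)).
      { apply (Rmult_lt_reg_l (INR (S m))); auto. field_simplify; try lra.
        pose proof (sumd_pos d w Hw). nra. }
      lra.
    + intros i Hi; apply Hn; auto.
  - intros [m [n [H1 H2]]]. assert (Hs := sumd_le d w (xp m n) y 0 Hw ltac:(intros i Hi; specialize (H2 i Hi); lra)).
    unfold Sw in *; lra.
Qed.

Lemma cover_up d (w : point) c y : (1 <= d)%nat -> (forall i, (i < d)%nat -> 0 < w i) ->
  (c < Sw d w y <-> exists m n, c <= Sw d w (xp m n) /\ forall i, (i < d)%nat -> xp m n i < y i).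
Proof.
  intros Hd Hw. split.
  - intro H. destruct (pick_m d w y (Sw d w y - c)) as [m [Hm1 Hm2]]; [lra|].
    destruct (grid_choice d m y false Hm1) as [n Hn]. exists m, n. split.
    + assert (Hs := sumd_le d w (xp m n) y (2 / INR (S m)) Hw (fun i Hi => ltac:(specialize (Hn i Hi); lra))).
      unfold Sw in *. assert (0 < INR (S m)) by (apply lt_0_INR; lia).
      assert (2 / INR (S m) * sumd d w < sumd d (fun i => w i * y i) - c).
      { apply (Rmult_lt_reg_l (INR (S m))); auto. field_simplify; try lra. }
      lra.
    + intros i Hi; apply Hn; auto.
  - intros [m [n [H1 H2]]]. assert (Hs := sumd_lt d w y (xp m n) Hd Hw H2).
    unfold Sw in *; lra.
Qed.

Definition Alow d w c m n : pset := fun y =>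
  Sw d w (xp m n) < c /\ forall i, (i < d)%nat -> y i <= xp m n i.
Definition Aup d w c m n : pset := fun y =>
  c <= Sw d w (xp m n) /\ forall i, (i < d)%nat -> xp m n i < y i.

Lemma Lt_eq d w c : (forall i, (i < d)%nat -> 0 < w i) ->
  (fun y => Sw d w y < c) = (fun y => exists m, exists n, Alow d w c m n y).
Proof. intro Hw. apply set_ext; intro y. apply cover_low; auto. Qed.

Lemma Gt_eq d w c : (1 <= d)%nat -> (forall i, (i < d)%nat -> 0 < w i) ->
  (fun y => c < Sw d w y) = (fun y => exists m, exists n, Aup d w c m n y).
Proof. intros Hd Hw. apply set_ext; intro y. apply cover_up; auto. Qed.

Lemma borel_Alow d w c m n : borel d (Alow d w c m n).
Proof.
  destruct (Rlt_dec (Sw d w (xp m n)) c).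
  - apply (borel_ext d (fun y => forall i, (i < d)%nat -> y i <= xp m n i)).
    unfold Alow; intuition. apply borel_L.
  - apply (borel_ext d (fun _ => False)). unfold Alow; intuition. apply borel_empty.
Qed.

Lemma borel_Aup d w c m n : borel d (Aup d w c m n).
Proof.
  destruct (Rle_dec c (Sw d w (xp m n))).
  - apply (borel_ext d (fun y => forall i, (i < d)%nat -> xp m n i < y i)).
    unfold Aup; intuition. apply borel_U.
  - apply (borel_ext d (fun _ => False)). unfold Aup; intuition. apply borel_empty.
Qed.

Lemma borel_Lt d w c : (forall i, (i < d)%nat -> 0 < w i) -> borel d (fun y => Sw d w y < c).
Proof. intro Hw. rewrite Lt_eq by auto. apply borel_union; intro; apply borel_union; intro; apply borel_Alow. Qed.

Lemma borel_Gt d w c : (1 <= d)%nat -> (forall i, (i < d)%nat -> 0 < w i) -> borel d (fun y => c < Sw d w y).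
Proof. intros Hd Hw. rewrite Gt_eq by auto. apply borel_union; intro; apply borel_union; intro; apply borel_Aup. Qed.

Lemma decomp d w c (nu : prob_measure d) : (1 <= d)%nat -> (forall i, (i < d)%nat -> 0 < w i) ->
  nu (fun y => Sw d w y = c) + nu (fun y => Sw d w y < c) + nu (fun y => c < Sw d w y) = 1 /\
  borel d (fun y => Sw d w y = c).
Proof.
  intros Hd Hw.
  assert (HL := borel_Lt d w c Hw). assert (HG := borel_Gt d w c Hd Hw).
  assert (HE : borel d (fun y => Sw d w y = c)).
  { apply (borel_ext d (fun y => ~ (Sw d w y < c \/ c < Sw d w y))).
    intro y; split; intro H. destruct (Rtotal_order (Sw d w y) c) as [|[|]]; auto; exfalso; apply H; auto.
    intros [|]; lra.
    apply borel_compl, borel_or; auto. }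
  split; auto. rewrite <- (pm_total d nu).
  replace (fun _ : point => True) with (fun y => Sw d w y = c \/ (Sw d w y < c \/ c < Sw d w y)).
  2:{ apply set_ext; intro y; split; auto. intros _. destruct (Rtotal_order (Sw d w y) c) as [|[|]]; auto. }
  rewrite pm_add2; auto. rewrite pm_add2; auto. ring.
  intros y; lra. apply borel_or; auto. intros y ? [|]; lra.
Qed.

Theorem mainTheorem3 (d : nat) (w : point) :
  (2 <= d)%nat ->
  (forall i, (i < d)%nat -> 0 < w i) ->
  minimal_conc d (fun C => is_copula d C /\ w_CM d w C).
Proof.
  intros Hd2 Hw C Cs [[mu2 [Hmu2 _]] HCM] HCs Hle. split; auto. intros mu Hmu.
  assert (Hd : (1 <= d)%nat) by lia.
  set (c := / 2 * sumd d w).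
  change (mu (fun y => Sw d w y = c) = 1).
  assert (H2 : mu2 (fun y => Sw d w y = c) = 1) by (apply HCM; auto).
  destruct (decomp d w c mu2 Hd Hw) as [D2 HE].
  destruct (decomp d w c mu Hd Hw) as [D1 _].
  pose proof (pm_nonneg d mu2 _ (borel_Lt d w c Hw)).
  pose proof (pm_nonneg d mu2 _ (borel_Gt d w c Hd Hw)).
  assert (L2 : mu2 (fun y => Sw d w y < c) = 0) by lra.
  assert (G2 : mu2 (fun y => c < Sw d w y) = 0) by lra.
  assert (L1 : mu (fun y => Sw d w y < c) = 0).
  { rewrite Lt_eq by auto. apply pm_union_zero.
    intro; apply borel_union; intro; apply borel_Alow.
    intro m. apply pm_union_zero. intro; apply borel_Alow. intro n.
    destruct (Rlt_dec (Sw d w (xp m n)) c) as [Hl|Hl].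
    - replace (Alow d w c m n) with (fun y => forall i, (i < d)%nat -> y i <= xp m n i)
        by (apply set_ext; unfold Alow; intuition).
      apply Rle_antisym; [|apply pm_nonneg, borel_L].
      destruct (Hle mu mu2 Hmu Hmu2 (xp m n)) as [Hx _]. unfold dist_fun in Hx.
      rewrite <- L2. eapply Rle_trans; [exact Hx|]. apply pm_mono. apply borel_L. apply borel_Lt; auto.
      intros y Hy. assert (Hs := sumd_le d w (xp m n) y 0 Hw ltac:(intros i Hi; specialize (Hy i Hi); lra)).
      unfold Sw in *; lra.
    - replace (Alow d w c m n) with (fun _ : point => False)
        by (apply set_ext; unfold Alow; intuition). apply pm_empty. }
  assert (G1 : mu (fun y => c < Sw d w y) = 0).
  { rewrite Gt_eq by auto. apply pm_union_zero.
    intro; apply borel_union; intro; apply borel_Aup.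
    intro m. apply pm_union_zero. intro; apply borel_Aup. intro n.
    destruct (Rle_dec c (Sw d w (xp m n))) as [Hl|Hl].
    - replace (Aup d w c m n) with (fun y => forall i, (i < d)%nat -> xp m n i < y i)
        by (apply set_ext; unfold Aup; intuition).
      apply Rle_antisym; [|apply pm_nonneg, borel_U].
      destruct (Hle mu mu2 Hmu Hmu2 (xp m n)) as [_ Hx]. unfold surv_fun in Hx.
      rewrite <- G2. eapply Rle_trans; [exact Hx|]. apply pm_mono. apply borel_U. apply borel_Gt; auto.
      intros y Hy. assert (Hs := sumd_lt d w y (xp m n) Hd Hw Hy).
      unfold Sw in *; lra.
    - replace (Aup d w c m n) with (fun _ : point => False)
        by (apply set_ext; unfold Aup; intuition). apply pm_empty. }
  lra.
Qed.
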